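(* Let $w$ be an infinite word and $n,n',n''$ non-negative integers with $n'\le n''\le n+n'$. Assume the prefixes of $w$ of lengths $n$, $n'$, $n''$ are palindromes, denoted $a$, $a'$, $a''$ respectively, and let $a_0$ be the prefix of $w$ of length $n+n'-n''$. Then: (1) there is a word $b$ such that $a=a_0b$ and $a''=a'b$; (2) if $n''\ge n-n'$, then $a_0$ is a palindrome.
   Context: Infinite words are right-infinite sequences of letters; a finite word is a palindrome if it equals its reversal, the empty word being a palindrome. *)

(* Defs.v *)
From mathcomp Require Import all_boot.
Set Implicit Arguments. Unset Strict Implicit. Unset Printing Implicit Defensive.

Definition infword (A : Type) := nat -> A.

Definition wprefix (A : Type) (w : infword A) (n : nat) : seq A := mkseq w n.

Definition palindrome (A : Type) (s : seq A) : Prop := rev s = s.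

(* Main.v *)
Require Import Defs.
From mathcomp Require Import all_boot.
From mathcomp Require Import zify.

Lemma mkseq_split (A : Type) (w : nat -> A) p q :
  mkseq w (p + q) = mkseq w p ++ mkseq (fun i => w (p + i)) q.
Proof.
rewrite /mkseq iotaD map_cat add0n; congr (_ ++ _).
by rewrite -[p in iota p]addn0 iotaDl -map_comp.
Qed.

Lemma palP (A : Type) (w : infword A) n :
  palindrome (wprefix w n) <-> (forall i, i < n -> w i = w (n - i.+1)).
Proof.
rewrite /palindrome /wprefix; split.
- move=> H i Hi.
  have := congr1 (fun s => nth (w 0) s i) H => /=.
  rewrite nth_rev size_mkseq // !nth_mkseq //; last lia.
- move=> H; apply: (@eq_from_nth _ (w 0)); first by rewrite size_rev.
  move=> i; rewrite size_rev size_mkseq => Hi.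
  rewrite nth_rev size_mkseq // !nth_mkseq //; last lia.
  rewrite H; last lia. congr w; lia.
Qed.

Theorem lemma5p2 (A : Type) (w : infword A) (n n' n'' : nat) :
  n' <= n'' <= n + n' ->
  palindrome (wprefix w n) ->
  palindrome (wprefix w n') ->
  palindrome (wprefix w n'') ->
  (exists b : seq A,
      wprefix w n = wprefix w (n + n' - n'') ++ b /\
      wprefix w n'' = wprefix w n' ++ b) /\
  (n - n' <= n'' -> palindrome (wprefix w (n + n' - n''))).
Proof.
move=> /andP [h1 h2] /palP Pa /palP Pa' /palP Pa''.
set m := n + n' - n''.
set k := n'' - n'.
have key : forall i, i < k -> w (n' + i) = w (m + i).
  move=> i Hi. rewrite Pa''; last lia.
  rewrite Pa; last lia. congr w; rewrite /m; lia.
split.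
  exists (mkseq (fun i => w (m + i)) k); split.
    have -> : n = m + k by rewrite /m /k; lia.
    by rewrite /wprefix mkseq_split.
  have -> : n'' = n' + k by rewrite /k; lia.
  rewrite /wprefix mkseq_split; congr (_ ++ _).
  rewrite /mkseq; apply/eq_in_map => i; rewrite mem_iota => /andP [_ Hi].
  by apply: key.
move=> h3; apply/palP => i Hi.
have E1 : forall j, j < n' -> w (k + j) = w j.
  move=> j Hj. rewrite Pa''; last (rewrite /k; lia).
  rewrite Pa'; last (rewrite /k; lia). congr w; rewrite /k; lia.
have E2 : forall j, j < m -> w (k + j) = w (m - j.+1).
  move=> j Hj. rewrite Pa; last (rewrite /k /m; lia).
  congr w; rewrite /k /m; lia.
case: (ltnP i n') => Hi'.
  by rewrite -E1 // E2.
have Hj : m - i.+1 < n' by rewrite /m; lia.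
rewrite -[in RHS]E1 // E2; last lia.
congr w; lia.
Qed.
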